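(* Consider the DF-SSQP algorithm described in the context and suppose (A1), (A2b) and (A3) hold. Then there exist a (possibly random) index $K^\star_{\tau\nu}<\infty$ and deterministic constants $\tilde\tau,\tilde\nu>0$ such that for all $k\ge K^\star_{\tau\nu}$, $\tau_k=\tau_{K^\star_{\tau\nu}}\ge\tilde\tau$ and $\nu_k=\nu_{K^\star_{\tau\nu}}\ge\tilde\nu$.
   Context: Problem and notation. Let $\mathcal P$ be a probability distribution on a sample space, $F(\cdot;\xi):\mathbb R^d\to\mathbb R$ for each sample $\xi$, $f(x)=\mathbb E_{\xi\sim\mathcal P}[F(x;\xi)]$, and $c:\mathbb R^d\to\mathbb R^m$. The problem is $\min_{x\in\mathbb R^d} f(x)$ subject to $c(x)=0$. Let $G(x)=\nabla c(x)\in\mathbb R^{m\times d}$ denote the constraint Jacobian, $c^j$ the $j$-th component of $c$, and $\mathcal L(x,\lambda)=f(x)+\lambda^Tc(x)$ the Lagrangian. A subscript $k$ denotes evaluation at the iterate $x_k$: $f_k=f(x_k)$, $\nabla f_k=\nabla f(x_k)$, $c_k=c(x_k)$, $G_k=G(x_k)$. For a vector $v$ with nonzero entries, $v^j$ is its $j$-th entry, $v^{-1}$ is the entrywise reciprocal and $v^{-T}=(v^{-1})^T$. Norms are Euclidean norms for vectors and operator norms for matrices. Algorithm (DF-SSQP). Inputs: $(x_0,\lambda_0)\in\mathbb R^d\times\mathbb R^m$, $\bar g_{-1}\in\mathbb R^d$, $\bar G_{-1}\in\mathbb R^{m\times d}$, $\bar B_{-1}=I$, $\tau_{-1},\nu_{-1}>0$;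 positive sequences $\{b_k\},\{\tilde b_k\},\{\alpha_k\},\{\beta_k\}$; parameters $\sigma,\epsilon\in(0,1)$, $\psi\ge0$, $p\ge1$; positive constants $\kappa_{\nabla f},\kappa_{\nabla c}$ (Lipschitz constants of $\nabla f$ and $\nabla c$); a distribution $\mathcal P_\Delta$ on $\mathbb R^d$. For $k=0,1,2,\dots$: (1) Draw $\xi_k\sim\mathcal P$ and two independent directions $\Delta_k,\tilde\Delta_k\sim\mathcal P_\Delta$. (2) Gradient estimates: $\hat\nabla F(x_k;\xi_k)=\frac{F(x_k+b_k\Delta_k;\xi_k)-F(x_k-b_k\Delta_k;\xi_k)}{2b_k}\Delta_k^{-1}$ and $\hat\nabla c(x_k)=\frac{c(x_k+b_k\Delta_k)-c(x_k-b_k\Delta_k)}{2b_k}\Delta_k^{-T}\in\mathbb R^{m\times d}$; averages $\bar g_k=(1-\beta_k)\bar g_{k-1}+\beta_k\hat\nabla F(x_k;\xi_k)$, $\bar G_k=(1-\beta_k)\bar G_{k-1}+\beta_k\hat\nabla c(x_k)$. (3) Hessian estimates: for each sign $\pm$, $\tilde\nabla F(x_k\pm b_k\Delta_k;\xi_k)=\frac{F(x_k\pm b_k\Delta_k+\tilde b_k\tilde\Delta_k;\xi_k)-F(x_k\pm b_k\Delta_k;\xi_k)}{\tilde b_k}\tilde\Delta_k^{-1}$ and $\tilde\nabla c(x_k\pm b_k\Delta_k)=\frac{c(x_k\pm b_k\Delta_k+\tilde b_k\tilde\Delta_k)-c(x_k\pm b_k\Delta_k)}{\tilde b_k}\tilde\Delta_k^{-T}$;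 $\tilde\nabla c^j$ is the transpose of the $j$-th row of $\tilde\nabla c$; $\delta\tilde\nabla F_k=\tilde\nabla F(x_k+b_k\Delta_k;\xi_k)-\tilde\nabla F(x_k-b_k\Delta_k;\xi_k)$, $\delta\tilde\nabla c^j_k=\tilde\nabla c^j(x_k+b_k\Delta_k)-\tilde\nabla c^j(x_k-b_k\Delta_k)$; $\hat\nabla^2F(x_k;\xi_k)=\frac12\big[\frac{\delta\tilde\nabla F_k}{2b_k}\Delta_k^{-T}+\Delta_k^{-1}\frac{(\delta\tilde\nabla F_k)^T}{2b_k}\big]$ and $\hat\nabla^2c^j_k=\frac12\big[\frac{\delta\tilde\nabla c^j_k}{2b_k}\Delta_k^{-T}+\Delta_k^{-1}\frac{(\delta\tilde\nabla c^j_k)^T}{2b_k}\big]$, $1\le j\le m$. (4) $\tilde G_k=\bar G_k+\delta_k^G$ with $\delta_k^G$ a perturbation making $\tilde G_k$ of full row rank; $\bar\nabla_x\mathcal L_k=\bar g_k+\tilde G_k^T\lambda_k$; $\hat\nabla_x^2\mathcal L_k=\hat\nabla^2F(x_k;\xi_k)+\sum_{j=1}^m\lambda_k^j\hat\nabla^2c^j_k$; $\bar B_k=(1-\beta_k)\bar B_{k-1}+\beta_k\hat\nabla_x^2\mathcal L_k$; $\tilde B_k=\bar B_k+\delta_k^B$ with $\delta_k^B$ a perturbation making $\tilde B_k$ positive definite on $\ker\tilde G_k$. (5) Solve $\tilde W_k\binom{\tilde\Delta x_k}{\tilde\Delta\lambda_k}=-\binom{\bar\nabla_x\mathcal L_k}{c_k}$,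 where $\tilde W_k=\begin{pmatrix}\tilde B_k&\tilde G_k^T\\ \tilde G_k&0\end{pmatrix}$. (6) With $\Delta q(d;\tau,x_k,\bar g_k,\tilde B_k)=-\tau(\bar g_k^Td+\tfrac12\max\{d^T\tilde B_kd,0\})+\|c_k\|$: let $s_k=\bar g_k^T\tilde\Delta x_k+\max\{\tilde\Delta x_k^T\tilde B_k\tilde\Delta x_k,0\}$; $\tau_k^{trial}=\infty$ if $s_k\le0$, else $\tau_k^{trial}=(1-\sigma)\|c_k\|/s_k$; $\tau_k=\tau_{k-1}$ if $\tau_{k-1}\le\tau_k^{trial}$, else $\tau_k=(1-\epsilon)\tau_k^{trial}$. Let $\nu_k^{trial}=\Delta q(\tilde\Delta x_k;\tau_k,x_k,\bar g_k,\tilde B_k)/\|\tilde\Delta x_k\|^2$; $\nu_k=\nu_{k-1}$ if $\nu_{k-1}\le\nu_k^{trial}$, else $\nu_k=(1-\epsilon)\nu_k^{trial}$. (7) Pick any (random) stepsize $\bar\alpha_k$ with $\frac{\nu_k\alpha_k}{\tau_k\kappa_{\nabla f}+\kappa_{\nabla c}}\le\bar\alpha_k\le\frac{\nu_k\alpha_k}{\tau_k\kappa_{\nabla f}+\kappa_{\nabla c}}+\psi\alpha_k^p$, and set $(x_{k+1},\lambda_{k+1})=(x_k,\lambda_k)+\bar\alpha_k(\tilde\Delta x_k,\tilde\Delta\lambda_k)$. Assumptions. (A1) There is an open convex set $\mathcal X\subseteq\mathbb R^d$ containing all points $x_k$, $x_k\pm b_k\Delta_k$, $x_k\pm b_k\Delta_k+\tilde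 b_k\tilde\Delta_k$; $f$ and $c$ are thrice differentiable with bounded first, second and third derivatives on $\mathcal X$; $f$ is bounded below on $\mathcal X$; there are constants $\kappa_c,\kappa_{1,G},\kappa_{2,G},\kappa_{1,\tilde G},\kappa_{2,\tilde G}>0$ with $\|c_k\|\le\kappa_c$, $\kappa_{1,G}I\preceq G_kG_k^T\preceq\kappa_{2,G}I$, $\kappa_{1,\tilde G}I\preceq\tilde G_k\tilde G_k^T\preceq\kappa_{2,\tilde G}I$ for all $k\ge0$; and constants $\kappa_{1,\tilde B},\kappa_{2,\tilde B}>0$ with $x^T\tilde B_kx\ge\kappa_{1,\tilde B}\|x\|^2$ for all $x$ with $\tilde G_kx=0$ and $\|\tilde B_k\|\le\kappa_{2,\tilde B}$. (A2b) For every sample $\xi$ and every $x\in\mathcal X$, $\mathbb E[F(x;\xi)\mid x]=f(x)$ and $\|\nabla F(x;\xi)-\nabla f(x)\|\le\Upsilon_m$ for a constant $\Upsilon_m>0$. (A3) $\Delta_k,\tilde\Delta_k\sim\mathcal P_\Delta$ are independent; a vector $\Delta\sim\mathcal P_\Delta$ has mutually independent entries, each symmetrically distributed about zero, with $\kappa_{\Delta_1}\le|\Delta^j|\le\kappa_{\Delta_2}$ for constants $\kappa_{\Delta_1},\kappa_{\Delta_2}>0$. *)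

(* Defs.v *)
From HB Require Import structures.
From mathcomp Require Import all_boot all_order all_algebra.
From mathcomp Require Import all_classical all_reals all_analysis.
Set Implicit Arguments. Unset Strict Implicit. Unset Printing Implicit Defensive.
Import Order.TTheory GRing.Theory Num.Theory.
Import numFieldNormedType.Exports.
Local Open Scope ring_scope.
Local Open Scope classical_set_scope.

Section DFSSQP.
Variables (R : realType) (d m : nat).
Local Notation V := 'cV[R]_d.

Definition dotv n (u v : 'cV[R]_n) : R := (u^T *m v) 0 0.
Definition enorm n (u : 'cV[R]_n) : R := Num.sqrt (dotv u u).

Definition vinv n (v : 'cV[R]_n) : 'cV[R]_n := \col_i (v i 0)^-1.

Definition convex_set (X : set V) :=
  forall u v (t : R), X u -> X v -> 0 <= t <= 1 -> X ((1 - t) *: u + t *: v).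

Definition has_grad (g : V -> R) (gr : V -> V) (x : V) :=
  differentiable g x /\ forall h : V, 'd g x h = dotv (gr x) h.

(* g is thrice differentiable on X with gradient g1 and bounded first, second
   and third derivatives on X: g2 is the Hessian, g3 i j the gradient of the
   (i,j) Hessian entry. *)
Definition C3_bounded (X : set V) (g : V -> R) (g1 : V -> V) :=
  exists (g2 : V -> 'M[R]_d) (g3 : 'I_d -> 'I_d -> V -> V) (M : R),
    forall x, X x ->
      [/\ has_grad g g1 x,
          (forall i, has_grad (fun y => g1 y i 0) (fun y => (row i (g2 y))^T) x),
          (forall i j, has_grad (fun y => g2 y i j) (g3 i j) x) &
          [/\ enorm (g1 x) <= M,
               (forall i j, `|g2 x i j| <= M) &
               (forall i j k, `|g3 i j x k 0| <= M)]].

Definition spF (F : V -> R) (x : V) (b : R) (D : V) : V :=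
  ((F (x + b *: D) - F (x - b *: D)) / (2 * b)) *: vinv D.
Definition spc (c : V -> 'cV[R]_m) (x : V) (b : R) (D : V) : 'M[R]_(m, d) :=
  (2 * b)^-1 *: ((c (x + b *: D) - c (x - b *: D)) *m (vinv D)^T).
Definition osF (F : V -> R) (y : V) (bt : R) (Dt : V) : V :=
  ((F (y + bt *: Dt) - F y) / bt) *: vinv Dt.
Definition osc (c : V -> 'cV[R]_m) (y : V) (bt : R) (Dt : V) : 'M[R]_(m, d) :=
  bt^-1 *: ((c (y + bt *: Dt) - c y) *m (vinv Dt)^T).
Definition hess_of (dg : V) (b : R) (D : V) : 'M[R]_d :=
  2^-1 *: (((2 * b)^-1 *: dg) *m (vinv D)^T + vinv D *m ((2 * b)^-1 *: dg)^T).
Definition hessF (F : V -> R) (x : V) (b bt : R) (D Dt : V) : 'M[R]_d :=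
  hess_of (osF F (x + b *: D) bt Dt - osF F (x - b *: D) bt Dt) b D.
Definition hessc (c : V -> 'cV[R]_m) (j : 'I_m) (x : V) (b bt : R) (D Dt : V)
  : 'M[R]_d :=
  hess_of ((row j (osc c (x + b *: D) bt Dt))^T
           - (row j (osc c (x - b *: D) bt Dt))^T) b D.
Definition hessL (F : V -> R) (c : V -> 'cV[R]_m) (lam : 'cV[R]_m)
  (x : V) (b bt : R) (D Dt : V) : 'M[R]_d :=
  hessF F x b bt D Dt + \sum_(j < m) lam j 0 *: hessc c j x b bt D Dt.

Definition quad (B : 'M[R]_d) (u : V) : R := dotv u (B *m u).
Definition Dq (u : V) (tau : R) (c : 'cV[R]_m) (g : V) (B : 'M[R]_d) : R :=
  - tau * (dotv g u + 2^-1 * Num.max (quad B u) 0) + enorm c.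

(* merit parameter update; tau_trial = +oo when s <= 0 *)
Definition tau_update (sigma eps taup : R) (c : 'cV[R]_m) (g u : V)
  (B : 'M[R]_d) : R :=
  let s := dotv g u + Num.max (quad B u) 0 in
  if s <= 0 then taup
  else let t := (1 - sigma) * enorm c / s in
       if taup <= t then taup else (1 - eps) * t.

(* ratio parameter update; nu_trial = +oo when u = 0 (convention) *)
Definition nu_update (eps nup tau : R) (c : 'cV[R]_m) (g u : V)
  (B : 'M[R]_d) : R :=
  if u == 0 then nup
  else let t := Dq u tau c g B / enorm u ^+ 2 in
       if nup <= t then nup else (1 - eps) * t.

(* value at index k-1, with the given value at index -1 *)
Definition prevk T (init : T) (s : nat -> T) (k : nat) : T :=
  match k with 0 => init | k'.+1 => s k' end.

End DFSSQP.

(* Main.v *)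
Require Import Defs.
From HB Require Import structures.
From mathcomp Require Import all_boot all_order all_algebra.
From mathcomp Require Import all_classical all_reals all_analysis.
From mathcomp Require Import ring lra.
Import Order.TTheory GRing.Theory Num.Theory.
Import numFieldNormedType.Exports.
Local Open Scope ring_scope.
Local Open Scope classical_set_scope.
Set Implicit Arguments. Unset Strict Implicit. Unset Printing Implicit Defensive.

Section Infra.
Variable R : realType.

Lemma dotvE n (u v : 'cV[R]_n) : dotv u v = \sum_i u i 0 * v i 0.
Proof. by rewrite /dotv !mxE; apply: eq_bigr => i _; rewrite !mxE. Qed.

Lemma dotvC n (u v : 'cV[R]_n) : dotv u v = dotv v u.
Proof. by rewrite !dotvE; apply: eq_bigr => i _; rewrite mulrC. Qed.

Lemma dotvDr n (u v w : 'cV[R]_n) : dotv u (v + w) = dotv u v + dotv u w.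
Proof. by rewrite !dotvE -big_split; apply: eq_bigr => i _; rewrite !mxE mulrDr. Qed.

Lemma dotvDl n (u v w : 'cV[R]_n) : dotv (v + w) u = dotv v u + dotv w u.
Proof. by rewrite dotvC dotvDr !(dotvC u). Qed.

Lemma dotvZr n a (u v : 'cV[R]_n) : dotv u (a *: v) = a * dotv u v.
Proof. by rewrite !dotvE mulr_sumr; apply: eq_bigr => i _; rewrite !mxE mulrCA. Qed.

Lemma dotvZl n a (u v : 'cV[R]_n) : dotv (a *: v) u = a * dotv v u.
Proof. by rewrite dotvC dotvZr dotvC. Qed.

Lemma dotvNr n (u v : 'cV[R]_n) : dotv u (- v) = - dotv u v.
Proof. by rewrite -scaleN1r dotvZr mulN1r. Qed.

Lemma dotvNl n (u v : 'cV[R]_n) : dotv (- v) u = - dotv v u.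
Proof. by rewrite dotvC dotvNr dotvC. Qed.

Lemma dotvBr n (u v w : 'cV[R]_n) : dotv u (v - w) = dotv u v - dotv u w.
Proof. by rewrite dotvDr dotvNr. Qed.

Lemma dotvBl n (u v w : 'cV[R]_n) : dotv (v - w) u = dotv v u - dotv w u.
Proof. by rewrite dotvDl dotvNl. Qed.

Lemma dotv0r n (u : 'cV[R]_n) : dotv u 0 = 0.
Proof. by rewrite -(scale0r 0) dotvZr mul0r. Qed.

Lemma dotv0l n (u : 'cV[R]_n) : dotv 0 u = 0.
Proof. by rewrite dotvC dotv0r. Qed.

Lemma dotv_ge0 n (u : 'cV[R]_n) : 0 <= dotv u u.
Proof. by rewrite dotvE; apply: sumr_ge0 => i _; rewrite -expr2 sqr_ge0. Qed.

Lemma dotv_eq0 n (u : 'cV[R]_n) : dotv u u = 0 -> u = 0.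
Proof.
rewrite dotvE => /eqP; rewrite psumr_eq0; last by move=> i _; rewrite -expr2 sqr_ge0.
move=> /allP H; apply/matrixP => i j; rewrite (ord1 j) mxE.
have := H i (mem_index_enum i); rewrite /= -expr2 sqrf_eq0 => /eqP //.
Qed.

Lemma dotv_tr m n (A : 'M[R]_(m, n)) u w : dotv u (A^T *m w) = dotv (A *m u) w.
Proof. by rewrite /dotv trmx_mul mulmxA. Qed.

Lemma enorm_ge0 n (u : 'cV[R]_n) : 0 <= enorm u.
Proof. exact: sqrtr_ge0. Qed.

Lemma enorm_sq n (u : 'cV[R]_n) : enorm u ^+ 2 = dotv u u.
Proof. by rewrite sqr_sqrtr // dotv_ge0. Qed.

Lemma CS n (u v : 'cV[R]_n) : dotv u v ^+ 2 <= dotv u u * dotv v v.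
Proof.
have [H0|Hpos] := eqVneq (dotv u u) 0.
  by rewrite (dotv_eq0 H0) !dotv0l expr0n /= mul0r.
have uu0 : 0 < dotv u u by rewrite lt_def Hpos dotv_ge0.
set w := dotv u u *: v - dotv u v *: u.
have := dotv_ge0 w.
rewrite /w !(dotvBl, dotvBr, dotvZl, dotvZr) (dotvC v u).
move=> H.
have : 0 <= dotv u u * (dotv u u * dotv v v - dotv u v ^+ 2).
  by move: H; rewrite expr2; nra.
rewrite pmulr_rge0 // subr_ge0 //.
Qed.

Lemma CSn n (u v : 'cV[R]_n) : `|dotv u v| <= enorm u * enorm v.
Proof.
rewrite -ler_sqr ?nnegrE ?mulr_ge0 ?enorm_ge0 //.
by rewrite exprMn !enorm_sq real_normK ?num_real // CS.
Qed.

Lemma CSr n (u v : 'cV[R]_n) : dotv u v <= enorm u * enorm v.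
Proof. exact: le_trans (ler_norm _) (CSn _ _). Qed.

Lemma enormD n (u v : 'cV[R]_n) : enorm (u + v) <= enorm u + enorm v.
Proof.
rewrite -ler_sqr ?nnegrE ?addr_ge0 ?enorm_ge0 //.
rewrite enorm_sq !(dotvDl, dotvDr) sqrrD !enorm_sq (dotvC v u).
have := CSr u v; lra.
Qed.

Lemma enormZ n a (u : 'cV[R]_n) : enorm (a *: u) = `|a| * enorm u.
Proof.
by rewrite /enorm dotvZl dotvZr mulrA -expr2 sqrtrM ?sqr_ge0 // sqrtr_sqr.
Qed.

Lemma enormN n (u : 'cV[R]_n) : enorm (- u) = enorm u.
Proof. by rewrite -scaleN1r enormZ normrN normr1 mul1r. Qed.

Lemma enorm0 n : enorm (0 : 'cV[R]_n) = 0.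
Proof. by rewrite /enorm dotv0l sqrtr0. Qed.

Lemma enormB n (u v : 'cV[R]_n) : enorm (u - v) <= enorm u + enorm v.
Proof. by rewrite -(enormN v) enormD. Qed.

Lemma enorm_le n (u : 'cV[R]_n) (a : R) : 0 <= a -> dotv u u <= a ^+ 2 -> enorm u <= a.
Proof. by move=> a0 H; rewrite -ler_sqr ?nnegrE ?enorm_ge0 // enorm_sq. Qed.

Lemma enorm_entries n (u : 'cV[R]_n) (a : R) : 0 <= a ->
  (forall i, `|u i 0| <= a) -> dotv u u <= n%:R * a ^+ 2.
Proof.
move=> a0 H; rewrite dotvE.
have -> : n%:R * a ^+ 2 = \sum_(i < n) a ^+ 2 by rewrite sumr_const card_ord mulr_natl.
apply: ler_sum => i _; rewrite -expr2 -real_normK ?num_real //.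
by rewrite ler_sqr ?nnegrE ?normr_ge0.
Qed.

End Infra.

Section Stab.
Variable R : realType.

Lemma stab (a : nat -> R) a0 L eps : 0 < a0 -> 0 < L -> 0 < eps < 1 ->
  (forall k, a k = prevk a0 a k \/ (L <= a k /\ a k <= (1 - eps) * prevk a0 a k)) ->
  exists K, (forall k, (K <= k)%N -> a k = a K) /\ (forall k, Num.min a0 L <= a k).
Proof.
move=> a00 L0 /andP[e0 e1] H.
set lb := Num.min a0 L.
have lb0 : 0 < lb by rewrite lt_min a00 L0.
have lbk : forall k, lb <= a k.
  elim=> [|k IH].
    case: (H 0%N) => /= [->|[]]; first by rewrite ge_min lexx.
    by move=> h _; rewrite ge_min h orbT.
  case: (H k.+1) => /= [->//|[] h _]; by rewrite ge_min h orbT.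
have lbp : forall k, lb <= prevk a0 a k.
  by case=> [|k] /=; [rewrite ge_min lexx | exact: lbk].
have dec : forall k, a k <= prevk a0 a k.
  move=> k; case: (H k) => [->//|[] _ h]; apply: le_trans h _.
  have := lbp k; nra.
have step : forall K j, a (K + j)%N = a K \/ a (K + j)%N <= a K - eps * lb.
  move=> K; elim=> [|j IH]; first by rewrite addn0; left.
  rewrite addnS; case: (H (K + j).+1) => /= [->//|[] _ h].
  right; have := lbk (K + j)%N; have := lbk K.
  case: IH => IH; first rewrite IH in h *.
    move=> hK _; apply: le_trans h _; nra.
  move=> hK hKj; apply: le_trans h _; nra.
have [K HK] : exists K, forall k, (K <= k)%N -> a k = a K; last first.
  by exists K; split; [exact: HK|exact: lbk].
apply: contrapT => Hn0.
have Hn : forall K, exists k, (K <= k)%N /\ a k <> a K.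
  move=> K; apply: contrapT => H1; apply: Hn0; exists K => k Kk.
  by apply: contrapT => ne; apply: H1; exists k.
have claim : forall n : nat, exists K, a K <= a0 - n%:R * (eps * lb).
  elim=> [|n [K HK]].
    exists 0%N; rewrite mul0r subr0; exact: (dec 0%N).
  have [k Hk] : exists k, (K <= k)%N /\ a k <> a K.
    exact: Hn.
  case: Hk => Kk ne; exists k.
  move: (step K (k - K)%N); rewrite subnKC // => -[h|h]; first by case: (ne h).
  rewrite -natr1; lra.
have b0 : 0 <= a0 / (eps * lb) by rewrite divr_ge0 // ?mulr_ge0 // ltW.
have := archi_boundP b0; set N := Num.bound _ => HN.
have [K HK] := claim N.
have := lbk K.
have : a0 < N%:R * (eps * lb).
  by rewrite -ltr_pdivrMr // mulr_gt0.
lra.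
Qed.
End Stab.

Section MV.
Variable R : realType.

Lemma convexP d (X : set 'cV[R]_d) : convex_set X ->
  forall u v t, X u -> X v -> 0 <= t <= 1 -> X (t *: u + (1 - t) *: v).
Proof.
move=> cX u v t Xu Xv /andP[t0 t1].
have := cX u v (Itv01 t0 t1).
by rewrite !inE => /(_ Xu Xv).
Qed.

Lemma grad_mvt (d : nat) (X : set 'cV[R]_d) (g : 'cV[R]_d -> R)
  (gr : 'cV[R]_d -> 'cV[R]_d) (u v : 'cV[R]_d) :
  convex_set X -> X u -> X v -> (forall y, X y -> has_grad g gr y) ->
  exists2 y, X y & g v - g u = dotv (gr y) (v - u).
Proof.
move=> cX Xu Xv Hg.
set w := v - u.
pose aff := fun t : R => u + t *: w.
have affE : forall t, aff t = (1 - t) *: u + t *: v.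
  by move=> t; rewrite /aff /w scalerBr scalerBl scale1r addrA addrAC addrC.
have Xaff : forall t, 0 <= t <= 1 -> X (aff t).
  by move=> t Ht; rewrite affE addrC; exact: (convexP cX Xv Xu Ht).
have affE2 : aff = cst u + ( *:%R ^~ w) by apply/funext.
have Haff : forall t, differentiable aff t /\ 'd aff t = ( *:%R ^~ w) :> (R -> _).
  move=> t; rewrite affE2.
  have H2 : is_diff t ( *:%R ^~ w) ( *:%R ^~ w) by exact: is_diff_scalel.
  have H1 : is_diff t (cst u) 0 by exact: is_diff_cst.
  have [? ->] := is_diffD H1 H2.
  by rewrite add0r.
pose h := g \o aff.
have hd : forall t : R, 0 <= t <= 1 -> differentiable h t /\ 'D_1 h t = dotv (gr (aff t)) w.
  move=> t Ht; have [dA dAE] := Haff t.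
  have [dg dgE] := Hg _ (Xaff t Ht).
  have dh : differentiable h t by apply: differentiable_comp.
  split => //; rewrite deriveE // diff_comp //= dAE /= scale1r dgE //.
have [c cin E] : exists2 c, c \in `[(0:R), 1]%R & h 1 - h 0 = 'D_1 h c * (1 - 0).
  apply: MVT_segment => //.
    move=> t; rewrite in_itv /= => /andP[t0 t1]; apply: derivableP.
    have Ht : 0 <= t <= 1 by rewrite !ltW.
    exact: diff_derivable (hd t Ht).1.
  apply: derivable_within_continuous => t; rewrite in_itv /= => Ht.
  exact: diff_derivable (hd t Ht).1.
move: cin; rewrite in_itv /= => Hc.
exists (aff c); first exact: Xaff.
move: E; rewrite subr0 mulr1 (hd c Hc).2 /h /= /aff scale0r scale1r addr0 /w [u + (v - u)]addrC subrK.
by [].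
Qed.

End MV.
Section SP.
Variable R : realType.

Lemma spF_bound d (X : set 'cV[R]_d) (F : 'cV[R]_d -> R) (gF : 'cV[R]_d -> 'cV[R]_d)
  (Mg kD1 kD2 b : R) (x D : 'cV[R]_d) :
  convex_set X -> X (x + b *: D) -> X (x - b *: D) ->
  (forall y, X y -> has_grad F gF y) -> (forall y, X y -> enorm (gF y) <= Mg) ->
  0 < b -> 0 < kD1 -> 0 <= kD2 -> (forall i, kD1 <= `|D i 0| <= kD2) ->
  enorm (spF F x b D) <= Mg * (d%:R * kD2 / kD1).
Proof.
move=> cX X1 X2 Hg HM b0 k0 kD20 HD.
have [y Xy E] := grad_mvt cX X2 X1 Hg.
have M0 : 0 <= Mg by apply: le_trans (HM _ Xy); exact: enorm_ge0.
have E2 : x + b *: D - (x - b *: D) = (2 * b) *: D.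
  by rewrite opprB addrC addrA subrK -scalerDl mulr2n mulrDl !mul1r.
rewrite E2 in E.
rewrite /spF enormZ E dotvZr.
have HDn : enorm D <= Num.sqrt d%:R * kD2.
  apply: enorm_le; first by rewrite mulr_ge0 ?sqrtr_ge0.
  by rewrite exprMn sqr_sqrtr ?ler0n //; apply: enorm_entries => // i; case/andP: (HD i).
have HVn : enorm (vinv D) <= Num.sqrt d%:R * kD1^-1.
  apply: enorm_le; first by rewrite mulr_ge0 ?sqrtr_ge0 ?invr_ge0 ?ltW.
  rewrite exprMn sqr_sqrtr ?ler0n //; apply: enorm_entries; first by rewrite invr_ge0 ltW.
  move=> i; rewrite mxE normfV; case/andP: (HD i) => h1 _.
  by rewrite lef_pV2 ?posrE // (lt_le_trans k0 h1).
have H1 : `|2 * b * dotv (gF y) D / (2 * b)| <= Mg * enorm D.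
  have -> : 2 * b * dotv (gF y) D / (2 * b) = dotv (gF y) D.
    by field; rewrite gt_eqF.
  apply: le_trans (CSn _ _) _; apply: ler_wpM2r; [exact: enorm_ge0 | exact: HM].
apply: le_trans (ler_wpM2r (enorm_ge0 _) H1) _.
apply: le_trans (_ : Mg * (Num.sqrt d%:R * kD2) * (Num.sqrt d%:R * kD1^-1) <= _).
  apply: ler_pM; rewrite ?mulr_ge0 ?enorm_ge0 //.
  by apply: ler_wpM2l.
rewrite -mulrA; apply: ler_wpM2l => //.
rewrite mulrACA -expr2 sqr_sqrtr ?ler0n // mulrA.
by []. Qed.
End SP.
Section Step.
Variable R : realType.

Lemma decomp m d (A : 'M[R]_(m, d)) (cc : 'cV[R]_m) k1 : 0 < k1 ->
  (forall v, k1 * dotv v v <= dotv v (A *m A^T *m v)) ->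
  exists w : 'cV[R]_m, A *m (A^T *m w) = cc.
Proof.
move=> k10 H.
set M := A *m A^T.
have MT : M^T = M by rewrite /M trmx_mul trmxK.
have uM : M \in unitmx.
  rewrite unitmxE unitfE; apply/negP => /det0P [v nv0 vM].
  have : (v^T : 'cV_m) = 0.
    apply: dotv_eq0; apply/eqP; rewrite eq_le dotv_ge0 andbT.
    have := H v^T; rewrite -/M -MT -trmx_mul vM trmx0 dotv0r.
    move=> h; rewrite -(pmulr_rle0 _ k10) //.
  move=> /(congr1 trmx); rewrite trmxK trmx0 => v0; by rewrite v0 eqxx in nv0.
exists (invmx M *m cc).
by rewrite mulmxA -/M mulmxA mulmxV // mul1mx.
Qed.

Lemma step_analysis d m (A : 'M[R]_(m, d)) (B : 'M[R]_d) (g dx : 'cV[R]_d)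
  (dl lam cc : 'cV[R]_m) (Gam k1 k1B k2B : R) :
  0 < k1 -> enorm g <= Gam ->
  (forall v, k1 * dotv v v <= dotv v (A *m A^T *m v)) ->
  (forall u, A *m u = 0 -> k1B * enorm u ^+ 2 <= quad B u) ->
  (forall u, enorm (B *m u) <= k2B * enorm u) ->
  B *m dx + A^T *m dl = - (g + A^T *m lam) ->
  A *m dx = - cc ->
  exists nu nv gv Buu Buv Bvu Bvv : R,
    [/\ 0 <= nu, 0 <= nv, enorm dx ^+ 2 = nu ^+ 2 + nv ^+ 2,
        k1 * nv ^+ 2 <= enorm cc ^+ 2 &
    [/\ dotv g dx = gv - Buu - Buv, quad B dx = Buu + Buv + Bvu + Bvv,
        `|gv| <= Gam * nv, k1B * nu ^+ 2 <= Buu &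
        [/\ Buu + Buv <= Gam * nu, `|Buv| <= k2B * nu * nv, `|Bvu| <= k2B * nv * nu &
            `|Bvv| <= k2B * nv * nv]]].
Proof.
move=> k10 Hg H1 HB1 HB2 KKT1 KKT2.
have [w Hw] := decomp (- cc) k10 H1.
have [v vE] : exists v, v = A^T *m w by exists (A^T *m w).
have [u [Au dxE]] : exists u, A *m u = 0 /\ dx = u + v.
  exists (dx - v); by rewrite mulmxBr KKT2 vE Hw subrr subrK.
have uv0 : dotv u v = 0 by rewrite vE dotv_tr Au dotv0l.
exists (enorm u), (enorm v), (dotv g v), (dotv u (B *m u)), (dotv u (B *m v)),
  (dotv v (B *m u)), (dotv v (B *m v)).
split; rewrite ?enorm_ge0 //.
- rewrite !enorm_sq dxE !(dotvDl, dotvDr) (dotvC v u) uv0; lra.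
-
  have hw : k1 * dotv w w <= dotv v v.
    have := H1 w; rewrite -mulmxA -vE.
    have -> : dotv w (A *m v) = dotv v v by rewrite dotvC -dotv_tr -vE.
    done.
  have hv : dotv v v = - dotv w cc.
    by rewrite {2}vE dotv_tr vE Hw dotvNl dotvC.
  have hc : - dotv w cc <= enorm w * enorm cc.
    by rewrite -dotvNr -(enormN cc); apply: CSr.
  rewrite !enorm_sq.
  have vv0 := dotv_ge0 v.
  have ww0 := dotv_ge0 w.
  have cc0 := dotv_ge0 cc.
  have [V0|Vpos] := eqVneq (dotv v v) 0.
    by rewrite V0 mulr0.
  have Vp : 0 < dotv v v by rewrite lt_def Vpos vv0.
  (* V^2 <= |w|^2 |cc|^2 <= V/k1 * C *)
  have h2 : dotv v v ^+ 2 <= dotv w w * dotv cc cc.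
    have h0 : dotv v v <= enorm w * enorm cc by rewrite hv.
    have : dotv v v ^+ 2 <= (enorm w * enorm cc) ^+ 2.
      by rewrite ler_sqr ?nnegrE ?mulr_ge0 ?enorm_ge0.
    by rewrite exprMn !enorm_sq.
  have h3 : k1 * dotv v v ^+ 2 <= dotv v v * dotv cc cc.
    apply: le_trans (_ : k1 * (dotv w w * dotv cc cc) <= _).
      by rewrite ler_pM2l.
    by rewrite mulrA ler_wpM2r.
  by move: h3; rewrite expr2 mulrA (mulrC _ (dotv v v)) ler_pM2l.
- split.
  + have h := congr1 (dotv u) KKT1.
    rewrite dotvDr dotv_tr Au dotv0l addr0 dotvNr dotvDr dotv_tr Au dotv0l addr0 in h.
    have h2 : dotv u g = - dotv u (B *m (u + v)) by rewrite -dxE h opprK.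
    rewrite {1}dxE dotvDr (dotvC g u) h2 mulmxDr dotvDr; lra.
  + by rewrite /quad {1}dxE dxE mulmxDr !(dotvDl, dotvDr); lra.
  + apply: le_trans (CSn _ _) _; apply: ler_wpM2r; [exact: enorm_ge0|done].
  + by have := HB1 _ Au; rewrite /quad.
  split.
  + have h := congr1 (dotv u) KKT1.
    rewrite dotvDr dotv_tr Au dotv0l addr0 dotvNr dotvDr dotv_tr Au dotv0l addr0 in h.
    have h2 : dotv u (B *m u) + dotv u (B *m v) = - dotv u g.
      by rewrite -dotvDr -mulmxDr -dxE h.
    rewrite h2; apply: le_trans (ler_norm _) _; rewrite normrN.
    apply: le_trans (CSn _ _) _; rewrite mulrC; apply: ler_wpM2r; [exact: enorm_ge0|done].
  + apply: le_trans (CSn _ _) _; rewrite -mulrA mulrCA; apply: ler_wpM2l; [exact: enorm_ge0| exact: HB2].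
  + apply: le_trans (CSn _ _) _; rewrite -mulrA mulrCA; apply: ler_wpM2l; [exact: enorm_ge0| exact: HB2].
  + apply: le_trans (CSn _ _) _; rewrite -mulrA mulrCA; apply: ler_wpM2l; [exact: enorm_ge0| exact: HB2].
Qed.

End Step.
Section Real.
Variable R : realType.

Lemma max_ge_theta (q th : R) : 0 <= th <= 1 -> th * q <= Num.max q 0.
Proof.
case/andP => t0 t1; have [q0|q0] := leP 0 q.
  nra.
nra.
Qed.

Lemma real_bounds (Gam k1 k1B k2B kap nu nv C gv Buu Buv Bvu Bvv : R) :
  0 < k1 -> 0 < k1B -> 0 < k2B -> 0 <= Gam ->
  0 <= nu -> 0 <= nv -> 0 <= C -> C <= kap -> k1 * nv ^+ 2 <= C ^+ 2 ->
  `|gv| <= Gam * nv -> k1B * nu ^+ 2 <= Buu -> Buu + Buv <= Gam * nu ->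
  `|Buv| <= k2B * nu * nv -> `|Bvu| <= k2B * nv * nu -> `|Bvv| <= k2B * nv * nv ->
  let r := Num.sqrt k1^-1 in
  let Ub := (Gam + k2B * (r * kap)) / k1B in
  [/\ nv <= r * C,
      gv - Buu - Buv + Num.max (Buu + Buv + Bvu + Bvv) 0
        <= (Gam + k2B * (Ub + r * kap)) * r * C &
      k1B * nu ^+ 2 - k2B * (2 * Ub + r * kap) * r * C <= Buu + Buv + Bvu + Bvv].
Proof.
move=> k10 k1B0 k2B0 G0 nu0 nv0 C0 Ck Hv Hgv HBuu HBg HBuv HBvu HBvv r Ub.
have r0 : 0 <= r by exact: sqrtr_ge0.
have r2 : r ^+ 2 = k1^-1 by rewrite sqr_sqrtr // invr_ge0 ltW.
have Ha : nv <= r * C.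
  rewrite -ler_sqr ?nnegrE ?mulr_ge0 // exprMn r2.
  by rewrite ler_pdivlMl // mulrC.
have Hb : nv <= r * kap by apply: le_trans Ha _; apply: ler_wpM2l.
have Hu : nu <= Ub.
  rewrite /Ub ler_pdivlMr // mulrC.
  have [nu00|nupos] := eqVneq nu 0.
    by rewrite nu00 mulr0 addr_ge0 // mulr_ge0 ?(ltW k2B0) // mulr_ge0 // (le_trans C0 Ck).
  have nup : 0 < nu by rewrite lt_def nupos nu0.
  have h1 : k1B * nu ^+ 2 <= nu * (Gam + k2B * nv).
    have hh : - Buv <= `|Buv| by rewrite -normrN ler_norm.
    have -> : nu * (Gam + k2B * nv) = Gam * nu + k2B * nu * nv by ring.
    lra.
  have h2 : k1B * nu <= Gam + k2B * nv.
    by move: h1; rewrite expr2 mulrA (mulrC _ nu) ler_pM2l.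
  apply: le_trans h2 _; rewrite lerD2l; apply: ler_wpM2l => //; exact: ltW.
have kap0 : 0 <= kap by exact: le_trans C0 Ck.
have Bnn : 0 <= k1B * nu ^+ 2 by rewrite mulr_ge0 ?sqr_ge0 // ltW.
have hgv : gv <= Gam * nv by exact: le_trans (ler_norm _) Hgv.
have hBvu : Bvu <= k2B * nv * nu by exact: le_trans (ler_norm _) HBvu.
have hBvv : Bvv <= k2B * nv * nv by exact: le_trans (ler_norm _) HBvv.
have hBuv : - Buv <= k2B * nu * nv by rewrite -normrN in HBuv; exact: le_trans (ler_norm _) HBuv.
have hBvu' : - Bvu <= k2B * nv * nu by rewrite -normrN in HBvu; exact: le_trans (ler_norm _) HBvu.
have hBvv' : - Bvv <= k2B * nv * nv by rewrite -normrN in HBvv; exact: le_trans (ler_norm _) HBvv.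
have nvv : 0 <= k2B * nv * nv by rewrite !mulr_ge0 // ltW.
split => //.
- have hS : nv * (Gam + k2B * (nu + nv)) <= (Gam + k2B * (Ub + r * kap)) * r * C.
    rewrite -mulrA mulrC; apply: ler_pM => //.
      by rewrite addr_ge0 // mulr_ge0 ?addr_ge0 // ltW.
    by rewrite lerD2l ler_wpM2l ?(ltW k2B0) //; apply: lerD.
  have SE : nv * (Gam + k2B * (nu + nv)) = Gam * nv + k2B * nv * nu + k2B * nv * nv by ring.
  rewrite SE in hS.
  have [q0|q0] := leP 0 (Buu + Buv + Bvu + Bvv).
    lra.
  move: hS; rewrite (mulrAC k2B nv nu); lra.
- have hP : nv * (2 * nu + nv) <= r * C * (2 * Ub + r * kap).
    apply: ler_pM => //; first by rewrite addr_ge0 // mulr_ge0.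
    by rewrite lerD // ler_wpM2l.
  have hP2 : k2B * (nv * (2 * nu + nv)) <= k2B * (r * C * (2 * Ub + r * kap)).
    by rewrite ler_wpM2l ?(ltW k2B0).
  have E1 : k2B * (nv * (2 * nu + nv)) = k2B * nu * nv + k2B * nv * nu + k2B * nv * nv by ring.
  have E2 : k2B * (r * C * (2 * Ub + r * kap)) = k2B * (2 * Ub + r * kap) * r * C by ring.
  rewrite E1 E2 in hP2.
  lra.
Qed.

Lemma real_nu (taut tau sig kap k1 k1B E nu nv C gd q th : R) :
  0 < taut -> taut <= tau -> 0 < sig -> 0 < kap -> 0 < k1 -> 0 < k1B ->
  0 <= E -> 0 <= nu -> 0 <= nv -> 0 <= C -> C <= kap ->
  k1 * nv ^+ 2 <= C ^+ 2 ->
  tau * (gd + Num.max q 0) <= (1 - sig) * C ->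
  k1B * nu ^+ 2 - E * C <= q ->
  th = sig / (sig + taut * E) ->
  Num.min (sig * k1 / (2 * kap)) (taut * th * k1B / 2) * (nu ^+ 2 + nv ^+ 2)
    <= - tau * (gd + 2^-1 * Num.max q 0) + C.
Proof.
move=> t0 tt s0 kap0 k10 k1B0 E0 nu0 nv0 C0 Ck Hv Hs Hq thE'.
set M := Num.max q 0.
have M0 : 0 <= M by rewrite /M le_max lexx orbT.
have den0 : 0 < sig + taut * E by rewrite ltr_wpDr // mulr_ge0 // ltW.
have th0 : 0 < th by rewrite thE' divr_gt0.
have th1 : th <= 1 by rewrite thE' ler_pdivrMr // mul1r lerDl mulr_ge0 // ltW.
have thE : taut * th * E <= sig.
  have : th * (sig + taut * E) = sig by rewrite thE' divfK // gt_eqF.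
  have : 0 <= th * sig by rewrite mulr_ge0 // ltW.
  nra.
have h3 : th * q <= M by apply: max_ge_theta; rewrite th1 ltW.
have h2 : taut * M <= tau * M by rewrite ler_wpM2r.
have h4 : taut * (th * q) <= taut * M by rewrite ler_wpM2l // ltW.
have h5 : taut * th * (k1B * nu ^+ 2 - E * C) <= taut * th * q.
  by rewrite ler_wpM2l // mulr_ge0 // ltW.
have h6 : k1 * nv ^+ 2 <= kap * C.
  apply: le_trans Hv _; rewrite expr2; apply: ler_wpM2r => //.
have key : sig / 2 * C + taut * th * k1B / 2 * nu ^+ 2
             <= - tau * (gd + 2^-1 * M) + C.
  have e1 : - tau * (gd + 2^-1 * M) + C = - (tau * (gd + M)) + tau * M / 2 + C.
    by field.
  rewrite e1.
  have f1 : tau * (gd + M) <= C - sig * C by move: Hs; rewrite -/M mulrBl mul1r.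
  have f5 : taut * th * (E * C) <= sig * C by rewrite mulrA ler_wpM2r.
  have f4 : taut * th * (k1B * nu ^+ 2) - taut * th * (E * C) <= taut * th * q.
    by move: h5; rewrite mulrBr.
  have f3 : taut * th * q <= taut * M by rewrite -mulrA.
  have -> : sig / 2 * C + taut * th * k1B / 2 * nu ^+ 2
    = (sig * C) / 2 + (taut * th * (k1B * nu ^+ 2)) / 2 by ring.
  lra.
apply: le_trans key.
set a := sig * k1 / (2 * kap).
set b := taut * th * k1B / 2.
have ha : Num.min a b <= a by rewrite ge_min lexx.
have hb : Num.min a b <= b by rewrite ge_min lexx orbT.
have hm0 : 0 <= Num.min a b.
  rewrite le_min !mulr_ge0 ?invr_ge0 ?mulr_ge0 ?ltW //.
have hav : a * nv ^+ 2 <= sig / 2 * C.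
  rewrite /a.
  rewrite (_ : sig * k1 / (2 * kap) * nv ^+ 2 = sig / 2 / kap * (k1 * nv ^+ 2)); last by field; rewrite gt_eqF //.
  apply: le_trans (ler_wpM2l _ h6) _; first by rewrite !mulr_ge0 ?invr_ge0 ?ltW.
  rewrite (_ : sig / 2 / kap * (kap * C) = sig / 2 * C) //; field; rewrite gt_eqF //.
have hbv : b * nu ^+ 2 = taut * th * k1B / 2 * nu ^+ 2 by [].
have n1 : Num.min a b * nu ^+ 2 <= b * nu ^+ 2 by rewrite ler_wpM2r ?sqr_ge0.
have n2 : Num.min a b * nv ^+ 2 <= a * nv ^+ 2 by rewrite ler_wpM2r ?sqr_ge0.
rewrite mulrDr; lra.
Qed.
End Real.

Unset Implicit Arguments. Set Strict Implicit. Set Printing Implicit Defensive.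

Theorem lemma3p9 (R : realType) (d m : nat)
  (* problem data *)
  (dXi : measure_display) (Xi : measurableType dXi) (P : probability Xi R)
  (F : 'cV[R]_d -> Xi -> R) (f : 'cV[R]_d -> R) (gradf : 'cV[R]_d -> 'cV[R]_d)
  (gradF : Xi -> 'cV[R]_d -> 'cV[R]_d)
  (c : 'cV[R]_d -> 'cV[R]_m) (G : 'cV[R]_d -> 'M[R]_(m, d))
  (X : set 'cV[R]_d)
  (* algorithm inputs *)
  (x0 : 'cV[R]_d) (lam0 : 'cV[R]_m) (gm1 : 'cV[R]_d) (Gm1 : 'M[R]_(m, d))
  (taum1 num1 : R) (b bt alpha beta : nat -> R)
  (sigma eps psi p kf kc : R)
  (* constants of the assumptions *)
  (kap_c k1G k2G k1Gt k2Gt k1B k2B Ups kD1 kD2 : R) :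
  (* algorithm parameters *)
  0 < taum1 -> 0 < num1 ->
  (forall k, 0 < b k) -> (forall k, 0 < bt k) ->
  (forall k, 0 < alpha k) -> (forall k, 0 < beta k <= 1) ->
  0 < sigma < 1 -> 0 < eps < 1 -> 0 <= psi -> 1 <= p -> 0 < kf -> 0 < kc ->
  (* kf, kc are Lipschitz constants of grad f and grad c *)
  (forall x y, X x -> X y -> enorm (gradf x - gradf y) <= kf * enorm (x - y)) ->
  (forall x y, X x -> X y -> forall u : 'cV[R]_d,
      enorm ((G x - G y) *m u) <= kc * enorm (x - y) * enorm u) ->
  (* (A1): problem-level part *)
  open X -> convex_set X ->
  C3_bounded X f gradf ->
  (forall j : 'I_m, C3_bounded X (fun x => c x j 0) (fun x => (row j (G x))^T)) ->
  (exists lb : R, forall x, X x -> lb <= f x) ->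
  0 < kap_c -> 0 < k1G -> 0 < k2G -> 0 < k1Gt -> 0 < k2Gt -> 0 < k1B -> 0 < k2B ->
  (* (A2b) *)
  (forall x, X x ->
     P.-integrable setT (fun xi => (F x xi)%:E) /\
     (\int[P]_xi (F x xi)%:E = (f x)%:E)%E) ->
  (forall xi x, X x -> has_grad (F^~ xi) (gradF xi) x) ->
  0 < Ups ->
  (forall xi x, X x -> enorm (gradF xi x - gradf x) <= Ups) ->
  (* (A3): bounds on the entries of the random directions *)
  0 < kD1 -> 0 < kD2 ->
  (* conclusion: deterministic constants, then every run of DF-SSQP *)
  exists taut nut : R, 0 < taut /\ 0 < nut /\
  forall (xi : nat -> Xi) (D Dt : nat -> 'cV[R]_d)
    (dG : nat -> 'M[R]_(m, d)) (dB : nat -> 'M[R]_d) (abar : nat -> R)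
    (x : nat -> 'cV[R]_d) (lam : nat -> 'cV[R]_m)
    (gbar : nat -> 'cV[R]_d) (Gbar Gt : nat -> 'M[R]_(m, d))
    (Bbar Bt : nat -> 'M[R]_d)
    (dx : nat -> 'cV[R]_d) (dl : nat -> 'cV[R]_m) (tau nu : nat -> R),
  (* (A3) for the realized directions *)
  (forall k i, kD1 <= `|D k i 0| <= kD2) ->
  (forall k i, kD1 <= `|Dt k i 0| <= kD2) ->
  (* the DF-SSQP recursion *)
  x 0%N = x0 -> lam 0%N = lam0 ->
  (forall k, gbar k = (1 - beta k) *: prevk gm1 gbar k
                      + beta k *: spF (F^~ (xi k)) (x k) (b k) (D k)) ->
  (forall k, Gbar k = (1 - beta k) *: prevk Gm1 Gbar k
                      + beta k *: spc c (x k) (b k) (D k)) ->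
  (forall k, Bbar k = (1 - beta k) *: prevk 1%:M Bbar k
                      + beta k *: hessL (F^~ (xi k)) c (lam k) (x k)
                                    (b k) (bt k) (D k) (Dt k)) ->
  (forall k, Gt k = Gbar k + dG k) ->
  (forall k, row_free (Gt k)) ->
  (forall k, Bt k = Bbar k + dB k) ->
  (forall k, forall u, Gt k *m u = 0 -> u != 0 -> 0 < quad (Bt k) u) ->
  (forall k, Bt k *m dx k + (Gt k)^T *m dl k
             = - (gbar k + (Gt k)^T *m lam k)) ->
  (forall k, Gt k *m dx k = - c (x k)) ->
  (forall k, tau k = tau_update sigma eps (prevk taum1 tau k)
                       (c (x k)) (gbar k) (dx k) (Bt k)) ->
  (forall k, nu k = nu_update eps (prevk num1 nu k) (tau k)
                      (c (x k)) (gbar k) (dx k) (Bt k)) ->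
  (forall k, nu k * alpha k / (tau k * kf + kc) <= abar k <=
             nu k * alpha k / (tau k * kf + kc) + psi * alpha k `^ p) ->
  (forall k, x k.+1 = x k + abar k *: dx k) ->
  (forall k, lam k.+1 = lam k + abar k *: dl k) ->
  (* (A1): iterate-level part *)
  (forall k, [/\ X (x k), X (x k + b k *: D k), X (x k - b k *: D k),
                 X (x k + b k *: D k + bt k *: Dt k) &
                 X (x k - b k *: D k + bt k *: Dt k)]) ->
  (forall k, enorm (c (x k)) <= kap_c) ->
  (forall k (v : 'cV[R]_m),
      k1G * dotv v v <= dotv v (G (x k) *m (G (x k))^T *m v) <= k2G * dotv v v) ->
  (forall k (v : 'cV[R]_m),
      k1Gt * dotv v v <= dotv v (Gt k *m (Gt k)^T *m v) <= k2Gt * dotv v v) ->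
  (forall k u, Gt k *m u = 0 -> k1B * enorm u ^+ 2 <= quad (Bt k) u) ->
  (forall k u, enorm (Bt k *m u) <= k2B * enorm u) ->
  exists K : nat, forall k : nat, (K <= k)%N ->
    [/\ tau k = tau K, taut <= tau K, nu k = nu K & nut <= nu K].
Proof.
move=> taum10 num10 Hb Hbt Halpha Hbeta Hsig Heps Hpsi Hp Hkf Hkc Lipf LipG
  openX cX Cf Cc lbf kapc0 k1G0 k2G0 k1Gt0 k2Gt0 k1B0 k2B0 HF HgF Ups0 HgFb kD10 kD20.
case/andP: Hsig => s0 s1; case/andP: Heps => e0 e1.
case: Cf => g2 [g3 [Mf HMf]].
set Mg := Mf + Ups.
have HgFM : forall xi y, X y -> enorm (gradF xi y) <= Mg.
  move=> xi y Xy; have [_ _ _ [hM _ _]] := HMf y Xy.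
  have -> : gradF xi y = (gradF xi y - gradf y) + gradf y by rewrite subrK.
  apply: le_trans (enormD _ _) _; rewrite /Mg addrC; apply: lerD => //; exact: HgFb.
set S := Mg * (d%:R * kD2 / kD1).
set Gam := Num.max (enorm gm1) S.
have Gam0 : 0 <= Gam by rewrite le_max enorm_ge0.
set r := Num.sqrt k1Gt^-1.
have r0 : 0 < r by rewrite sqrtr_gt0 invr_gt0.
set Ub := (Gam + k2B * (r * kap_c)) / k1B.
have Ub0 : 0 <= Ub.
  by apply: divr_ge0; [apply: addr_ge0 => //; apply: mulr_ge0; [exact: ltW | apply: mulr_ge0; exact: ltW] | exact: ltW].
set Cs := (Gam + k2B * (Ub + r * kap_c)) * r.
have rk0 : 0 < r * kap_c by apply: mulr_gt0.
have Cs0 : 0 < Cs.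
  apply: mulr_gt0 => //.
  have h : 0 < k2B * (Ub + r * kap_c) by apply: mulr_gt0 => //; lra.
  lra.
set T0 := (1 - sigma) / Cs.
have T00 : 0 < T0.
  apply: divr_gt0 => //; lra.
set taut := Num.min taum1 ((1 - eps) * T0).
have taut0 : 0 < taut.
  rewrite lt_min taum10 /=; apply: mulr_gt0 => //; lra.
set E := k2B * (2 * Ub + r * kap_c) * r.
have E0 : 0 <= E.
  apply: mulr_ge0; last exact: ltW; apply: mulr_ge0; first exact: ltW.
  by apply: addr_ge0; [apply: mulr_ge0 | apply: mulr_ge0; exact: ltW].
set th := sigma / (sigma + taut * E).
set N1 := Num.min (sigma * k1Gt / (2 * kap_c)) (taut * th * k1B / 2).
have th0 : 0 < th by rewrite divr_gt0 // ltr_wpDr // mulr_ge0 // ltW.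
have N10 : 0 < N1.
  rewrite lt_min; apply/andP; split.
    by apply: mulr_gt0; [apply: mulr_gt0 | rewrite invr_gt0; apply: mulr_gt0].
  by apply: mulr_gt0; [apply: mulr_gt0; [apply: mulr_gt0|]|].
set nut := Num.min num1 ((1 - eps) * N1).
have nut0 : 0 < nut.
  rewrite lt_min num10 /=; apply: mulr_gt0 => //; lra.
exists taut, nut; split => //; split => //.
move=> xi D Dt dG dB abar x lam gbar Gbar Gt Bbar Bt dx dl tau nu
  HD HDt Hx0 Hl0 Hgbar HGbar HBbar HGt Hrf HBt Hpd KKT1 KKT2 Htau Hnu Habar
  Hxs Hls HXk Hck HGk HGtk HB1 HB2.
have Hsp : forall k, enorm (spF (F^~ (xi k)) (x k) (b k) (D k)) <= Gam.
  move=> k; have [X0 X1 X2 _ _] := HXk k.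
  apply: le_trans (spF_bound cX X1 X2 (HgF (xi k)) (HgFM (xi k)) (Hb k) kD10 (ltW kD20) (HD k)) _.
  by rewrite le_max lexx orbT.
have conv : forall (a cc : 'cV[R]_d) (be : R), 0 < be <= 1 -> enorm a <= Gam ->
    enorm cc <= Gam -> enorm ((1 - be) *: a + be *: cc) <= Gam.
  move=> a cc be /andP[be0 be1] ha hc; apply: le_trans (enormD _ _) _.
  rewrite !enormZ ger0_norm; last by lra.
  rewrite gtr0_norm //.
  have h1 : (1 - be) * enorm a <= (1 - be) * Gam by apply: ler_wpM2l => //; lra.
  have h2 : be * enorm cc <= be * Gam by apply: ler_wpM2l => //; exact: ltW.
  lra.
have Hgb : forall k, enorm (gbar k) <= Gam.
  elim=> [|k IH]; rewrite Hgbar; apply: conv; try exact: Hbeta; try exact: Hsp; by [rewrite /= le_max lexx | ].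
have Key : forall k,
  dotv (gbar k) (dx k) + Num.max (quad (Bt k) (dx k)) 0 <= Cs * enorm (c (x k)) /\
  (forall tk, taut <= tk ->
     tk * (dotv (gbar k) (dx k) + Num.max (quad (Bt k) (dx k)) 0)
       <= (1 - sigma) * enorm (c (x k)) ->
     N1 * enorm (dx k) ^+ 2 <= Dq (dx k) tk (c (x k)) (gbar k) (Bt k)).
  move=> k.
  have H1 : forall v, k1Gt * dotv v v <= dotv v (Gt k *m (Gt k)^T *m v).
    by move=> v; case/andP: (HGtk k v).
  have [nu_ [nv [gv [Buu [Buv [Bvu [Bvv [nu0 nv0 Edx Hv
     [Eg Eq Hgv HBuu [HBg HBuv HBvu HBvv]]]]]]]]]] :=
    step_analysis k1Gt0 (Hgb k) H1 (HB1 k) (HB2 k) (KKT1 k) (KKT2 k).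
  have C0 := enorm_ge0 (c (x k)).
  have [Ha Hs Hq] := real_bounds k1Gt0 k1B0 k2B0 Gam0 nu0 nv0 C0 (Hck k) Hv Hgv
    HBuu HBg HBuv HBvu HBvv.
  rewrite Eg Eq; split; first exact: Hs.
  move=> tk htk Hts; rewrite /Dq Edx Eg Eq.
  apply: (real_nu (E := E) _ htk s0 kapc0 k1Gt0 k1B0 E0 nu0 nv0 C0 (Hck k) Hv Hts Hq).
    exact: taut0.
  by [].
have e' : 0 < 1 - eps by lra.
have Hst : forall k, tau k = prevk taum1 tau k \/
    ((1 - eps) * T0 <= tau k /\ tau k <= (1 - eps) * prevk taum1 tau k).
  move=> k; set pk := prevk taum1 tau k.
  have [K1 _] := Key k.
  move: (Htau k); rewrite -/pk /tau_update => ->.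
  set sk := dotv (gbar k) (dx k) + Num.max (quad (Bt k) (dx k)) 0.
  case: ifP => hs; first by left.
  case: ifP => hp; first by left.
  right; set t := (1 - sigma) * enorm (c (x k)) / sk.
  have s0' : 0 < sk by rewrite ltNge hs.
  have tp : t < pk by rewrite ltNge hp.
  have tT : T0 <= t.
    rewrite /t ler_pdivlMr //.
    have : T0 * sk <= T0 * (Cs * enorm (c (x k))) by apply: ler_wpM2l; [exact: ltW | exact: K1].
    have -> : T0 * (Cs * enorm (c (x k))) = (1 - sigma) * enorm (c (x k)).
      by rewrite /T0 mulrA divfK // gt_eqF.
    done.
  by split; rewrite ler_pM2l // ltW.
have epsH : 0 < eps < 1 by rewrite e0 e1.
have [K1 [HK1 Hlb1]] := stab taum10 (mulr_gt0 e' T00) epsH Hst.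
have Htaus : forall k, tau k * (dotv (gbar k) (dx k) + Num.max (quad (Bt k) (dx k)) 0)
    <= (1 - sigma) * enorm (c (x k)).
  move=> k; set pk := prevk taum1 tau k.
  have pk0 : 0 < pk by rewrite /pk; case: (k) => [|k'] //=; apply: lt_le_trans taut0 (Hlb1 k').
  move: (Htau k); rewrite -/pk /tau_update => ->.
  set sk := dotv (gbar k) (dx k) + Num.max (quad (Bt k) (dx k)) 0.
  have C0 := enorm_ge0 (c (x k)).
  have sC0 : 0 <= (1 - sigma) * enorm (c (x k)) by apply: mulr_ge0 => //; lra.
  case: ifP => hs.
    by apply: le_trans _ sC0; rewrite pmulr_rle0.
  have s0' : 0 < sk by rewrite ltNge hs.
  have ts : (1 - sigma) * enorm (c (x k)) / sk * sk = (1 - sigma) * enorm (c (x k)).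
    by rewrite divfK // gt_eqF.
  case: ifP => hp.
    by apply: le_trans (ler_wpM2r (ltW s0') hp) _; rewrite ts.
  rewrite -[(1 - eps) * _ * sk]mulrA ts.
  have : 0 <= eps * ((1 - sigma) * enorm (c (x k))) by apply: mulr_ge0 => //; exact: ltW.
  lra.
have Hsn : forall k, nu k = prevk num1 nu k \/
    ((1 - eps) * N1 <= nu k /\ nu k <= (1 - eps) * prevk num1 nu k).
  move=> k; set pk := prevk num1 nu k.
  have [_ K2] := Key k.
  move: (Hnu k); rewrite -/pk /nu_update => ->.
  case: eqP => hdx; first by left.
  case: ifP => hp; first by left.
  right; set t := Dq (dx k) (tau k) (c (x k)) (gbar k) (Bt k) / enorm (dx k) ^+ 2.
  have n0 : 0 < enorm (dx k) ^+ 2.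
    rewrite enorm_sq lt_def dotv_ge0 andbT; apply/eqP => h; apply: hdx; exact: dotv_eq0 h.
  have tN : N1 <= t by rewrite /t ler_pdivlMr //; apply: K2 (Hlb1 k) (Htaus k).
  have tp : t < pk by rewrite ltNge hp.
  by split; rewrite ler_pM2l // ltW.
have [K2 [HK2 Hlb2]] := stab num10 (mulr_gt0 e' N10) epsH Hsn.
exists (maxn K1 K2) => k Kk.
have m1 : (K1 <= maxn K1 K2)%N by rewrite leq_maxl.
have m2 : (K2 <= maxn K1 K2)%N by rewrite leq_maxr.
have k1 : (K1 <= k)%N by apply: leq_trans Kk.
have k2 : (K2 <= k)%N by apply: leq_trans Kk.
split.
- by rewrite (HK1 k k1) (HK1 _ m1).
- exact: Hlb1.
- by rewrite (HK2 k k2) (HK2 _ m2).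
- exact: Hlb2.
Qed.
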